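(* Let $Q$ be a groupoid quantale with base locale $A$ and let $G=\mathcal G(Q)$ be its associated open groupoid. Then $Q$ is a principal quantale if and only if $G$ is an effective equivalence relation.
   Context: Let $A$ be a locale (frame), whose multiplication is $\wedge$. An $A$-$A$-bimodule is a sup-lattice $M$ with actions $(a,m)\mapsto a\triangleright m$ and $(m,a)\mapsto m\triangleleft a$, each preserving arbitrary joins in each variable, such that $1_A\triangleright m=m$, $(a\wedge b)\triangleright m=a\triangleright(b\triangleright m)$, $m\triangleleft 1_A=m$, $m\triangleleft(a\wedge b)=(m\triangleleft a)\triangleleft b$, $(a\triangleright m)\triangleleft b=a\triangleright(m\triangleleft b)$. An $A$-$A$-quantale is such a bimodule $Q$ with an associative multiplication preserving joins in each variable with $(a\triangleright x)y=a\triangleright(xy)$, $(x\triangleleft a)y=x(a\triangleright y)$, $(xy)\triangleleft a=x(y\triangleleft a)$; it is involutive if it has a join-preserving $x\mapsto x^*$ with $x^{**}=x$, $(xy)^*=y^*x^*$, $(a\triangleright(x\triangleleft b))^*=b\triangleright(x^*\triangleleft a)$. $1_Q$ is the top of $Q$. A support is a join-preserving $\varsigma:Q\to A$ with $\varsigma(1_Q)=1_A$, $\varsigma(x)\triangleright y\le xx^*y$, $\varsigma(x)\triangleright x=x$; equivariant if $\varsigma(a\triangleright x)=a\wedge\varsigma(x)$. A based quantal frame is an involutive $A$-$A$-quantale that is a frame with $(a\triangleright x)\wedge y=a\triangleright(x\wedge y)$ and $(x\triangleleft a)\wedge y=(x\wedge y)\triangleleft a$; an equivariantly supported quantal frame is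 one with an equivariant support. It is reflexive if it has a frame homomorphism $\upsilon:Q\to A$ with $\upsilon(a\triangleright1_Q)=a=\upsilon(1_Q\triangleleft a)$. $Q\otimes_AQ$ is the quotient of $Q\otimes Q$ by $x\otimes(a\triangleright y)=(x\triangleleft a)\otimes y$, $\mu_A:Q\otimes_AQ\to Q$ the induced multiplication; $Q$ is multiplicative if the right adjoint of $\mu_A$ preserves joins. Unit laws: $\bigvee_{xy\le a}\upsilon(x)\triangleright y=a$ for all $a$; inverse law: $\upsilon(a)\triangleright1_Q=\bigvee_{xy^*\le a}x\wedge y$ for all $a$. A groupoid quantale is a multiplicative equivariantly supported reflexive based quantal frame satisfying the unit laws and inverse law. Its open groupoid $\mathcal G(Q)$ has $\mathcal O(G_0)=A$, $\mathcal O(G_1)=Q$, $d^*(a)=a\triangleright1_Q$, $i^*(x)=x^*$, $r=d\circ i$, $u^*=\upsilon$, $\mathcal O(G_2)=Q\otimes_AQ$, $m^*(a)=\bigvee_{xy\le a}x\otimes y$. Let $R(Q)=\{x\in Q\mid x1_Q\le x\}$, $L(Q)=\{x^*\mid x\in R(Q)\}$, $T(Q)=R(Q)\cap L(Q)$. A principal quantale is an equivariantly supported quantal frame $Q$ such that $Q\cong R(Q)\otimes_{T(Q)}L(Q)$ in the category of frames (the pushout of the inclusions $T(Q)\to R(Q)$, $T(Q)\to L(Q)$). An open localic groupoid $G$ is an effective equivalence relation if $(G_1,d,r)$ is the kernel pair in the category of locales of the coequalizer $G_0\to G_0/G$ of $d$ and $r$, i.e. the square formed by $d,r$ and two copies of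 $G_0\to G_0/G$ is a pullback. *)

(* Defs.v *)
Set Implicit Arguments.
Unset Strict Implicit.

(* Frames (= locales, via their frames of opens).                      *)

Definition img {T U : Type} (f : T -> U) (S : T -> Prop) : U -> Prop :=
  fun y => exists x, S x /\ y = f x.

Record frame := Frame {
  fcar :> Type;
  fle : fcar -> fcar -> Prop;
  fsup : (fcar -> Prop) -> fcar;
  fmeet : fcar -> fcar -> fcar;
  fle_refl : forall x, fle x x;
  fle_trans : forall x y z, fle x y -> fle y z -> fle x z;
  fle_antisym : forall x y, fle x y -> fle y x -> x = y;
  fsup_ub : forall (S : fcar -> Prop) x, S x -> fle x (fsup S);
  fsup_least : forall (S : fcar -> Prop) y, (forall x, S x -> fle x y) -> fle (fsup S) y;
  fmeet_glb : forall x y z, fle z (fmeet x y) <-> (fle z x /\ fle z y);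
  fdistr : forall a (S : fcar -> Prop),
      fmeet a (fsup S) = fsup (img (fmeet a) S)
}.

Arguments fle {f}.
Arguments fsup {f}.
Arguments fmeet {f}.

Definition ftop {F : frame} : F := fsup (fun _ => True).

Definition frame_hom (F1 F2 : frame) (f : F1 -> F2) : Prop :=
  (forall S : F1 -> Prop, f (fsup S) = fsup (img f S)) /\
  (forall x y, f (fmeet x y) = fmeet (f x) (f y)) /\
  f ftop = ftop.

(* A frame homomorphism out of a subframe [P] of [F1] (P closed under
   joins, finite meets and top in F1), represented by its values on P. *)
Definition frame_hom_on (F1 : frame) (P : F1 -> Prop) (F2 : frame)
    (f : F1 -> F2) : Prop :=
  (forall S : F1 -> Prop, (forall x, S x -> P x) -> f (fsup S) = fsup (img f S)) /\
  (forall x y, P x -> P y -> f (fmeet x y) = fmeet (f x) (f y)) /\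
  f ftop = ftop.

Definition join_preserving (F1 F2 : frame) (f : F1 -> F2) : Prop :=
  forall S : F1 -> Prop, f (fsup S) = fsup (img f S).

Section GroupoidQuantale.

Variables (A Q : frame)
          (actL : A -> Q -> Q)      (* a |> x *)
          (actR : Q -> A -> Q)      (* x <| a *)
          (mul : Q -> Q -> Q)
          (inv : Q -> Q).

Definition is_bimodule : Prop :=
  (forall (S : A -> Prop) m, actL (fsup S) m = fsup (img (fun a => actL a m) S)) /\
  (forall a (S : Q -> Prop), actL a (fsup S) = fsup (img (actL a) S)) /\
  (forall (S : Q -> Prop) a, actR (fsup S) a = fsup (img (fun m => actR m a) S)) /\
  (forall m (S : A -> Prop), actR m (fsup S) = fsup (img (actR m) S)) /\
  (forall m, actL ftop m = m) /\
  (forall a b m, actL (fmeet a b) m = actL a (actL b m)) /\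
  (forall m, actR m ftop = m) /\
  (forall a b m, actR m (fmeet a b) = actR (actR m a) b) /\
  (forall a b m, actR (actL a m) b = actL a (actR m b)).

Definition is_AA_quantale : Prop :=
  is_bimodule /\
  (forall x y z, mul (mul x y) z = mul x (mul y z)) /\
  (forall (S : Q -> Prop) y, mul (fsup S) y = fsup (img (fun x => mul x y) S)) /\
  (forall x (S : Q -> Prop), mul x (fsup S) = fsup (img (mul x) S)) /\
  (forall a x y, mul (actL a x) y = actL a (mul x y)) /\
  (forall a x y, mul (actR x a) y = mul x (actL a y)) /\
  (forall a x y, actR (mul x y) a = mul x (actR y a)).

Definition is_involutive_AA_quantale : Prop :=
  is_AA_quantale /\
  join_preserving inv /\
  (forall x, inv (inv x) = x) /\
  (forall x y, inv (mul x y) = mul (inv y) (inv x)) /\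
  (forall a b x, inv (actL a (actR x b)) = actL b (actR (inv x) a)).

Definition is_based_quantal_frame : Prop :=
  is_involutive_AA_quantale /\
  (forall a x y, fmeet (actL a x) y = actL a (fmeet x y)) /\
  (forall a x y, fmeet (actR x a) y = actR (fmeet x y) a).

Definition is_support (s : Q -> A) : Prop :=
  join_preserving s /\
  s ftop = ftop /\
  (forall x y, fle (actL (s x) y) (mul (mul x (inv x)) y)) /\
  (forall x, actL (s x) x = x).

Definition is_equivariant_support (s : Q -> A) : Prop :=
  is_support s /\ (forall a x, s (actL a x) = fmeet a (s x)).

Definition is_eq_supported_quantal_frame : Prop :=
  is_based_quantal_frame /\ exists s : Q -> A, is_equivariant_support s.

Definition is_reflexivity (u : Q -> A) : Prop :=
  frame_hom u /\ (forall a, u (actL a ftop) = a) /\ (forall a, u (actR ftop a) = a).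

(* The tensor product Q (x)_A Q of sup-lattices, presented concretely:
   an element is a set D of pairs (x,y) (standing for the join of the
   x (x) y with (x,y) in D) which is down-closed and closed under joins in
   each variable separately (so x (x) y <= D iff D x y), and which respects
   the defining relations (x <| a) (x) y = x (x) (a |> y). *)
Definition is_tensorA (D : Q -> Q -> Prop) : Prop :=
  (forall x x' y, D x y -> fle x' x -> D x' y) /\
  (forall x y y', D x y -> fle y' y -> D x y') /\
  (forall (S : Q -> Prop) y, (forall x, S x -> D x y) -> D (fsup S) y) /\
  (forall x (S : Q -> Prop), (forall y, S y -> D x y) -> D x (fsup S)) /\
  (forall x a y, D (actR x a) y <-> D x (actL a y)).

Definition tensorA_sup (Fam : (Q -> Q -> Prop) -> Prop) : Q -> Q -> Prop :=
  fun x y => forall D, is_tensorA D ->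
    (forall D', Fam D' -> forall x' y', D' x' y' -> D x' y') -> D x y.

Definition mu_A (D : Q -> Q -> Prop) : Q :=
  fsup (fun z => exists x y, D x y /\ z = mul x y).

Definition mu_A_radj (z : Q) : Q -> Q -> Prop :=
  tensorA_sup (fun D => is_tensorA D /\ fle (mu_A D) z).

Definition is_multiplicative : Prop :=
  forall (Z : Q -> Prop) x y,
    mu_A_radj (fsup Z) x y <->
    tensorA_sup (fun D => exists z, Z z /\ D = mu_A_radj z) x y.

Definition unit_laws (u : Q -> A) : Prop :=
  forall a : Q,
    fsup (fun z => exists x y, fle (mul x y) a /\ z = actL (u x) y) = a.

Definition inverse_law (u : Q -> A) : Prop :=
  forall a : Q,
    actL (u a) ftop = fsup (fun z => exists x y, fle (mul x (inv y)) a /\ z = fmeet x y).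

Definition is_groupoid_quantale : Prop :=
  is_eq_supported_quantal_frame /\
  is_multiplicative /\
  exists u : Q -> A, is_reflexivity u /\ unit_laws u /\ inverse_law u.

Definition RQ (x : Q) : Prop := fle (mul x ftop) x.
Definition LQ (x : Q) : Prop := exists y, RQ y /\ x = inv y.
Definition TQ (x : Q) : Prop := RQ x /\ LQ x.

(* Q is the pushout in Frm of the subframe inclusions T(Q) -> R(Q),
   T(Q) -> L(Q), with cocone the inclusions R(Q) -> Q, L(Q) -> Q. *)
Definition is_pushout_RTL : Prop :=
  forall (F : frame) (f g : Q -> F),
    frame_hom_on RQ f -> frame_hom_on LQ g ->
    (forall t, TQ t -> f t = g t) ->
    exists h : Q -> F,
      (frame_hom h /\ (forall x, RQ x -> h x = f x) /\ (forall x, LQ x -> h x = g x)) /\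
      (forall h' : Q -> F,
         frame_hom h' -> (forall x, RQ x -> h' x = f x) -> (forall x, LQ x -> h' x = g x) ->
         forall x, h' x = h x).

Definition is_principal_quantale : Prop :=
  is_eq_supported_quantal_frame /\ is_pushout_RTL.

(* d_star(a) = a |> 1_Q ; r = d o i, so r_star = i_star o d_star. *)
Definition G_dstar (a : A) : Q := actL a ftop.
Definition G_rstar (a : A) : Q := inv (G_dstar a).

(* The coequalizer G_0 -> G_0/G of d, r in Loc is, on frames, the
   equalizer O(G_0/G) = {a in A | d_star a = r_star a} with its inclusion into A.
   G is an effective equivalence relation iff the square
       G_1 --r--> G_0
        |d         |
       G_0 ----> G_0/G
   is a pullback of locales, i.e. Q (with d_star, r_star) is the pushout in Frm
   of the two inclusions O(G_0/G) -> A. *)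
Definition G_quotient_opens (a : A) : Prop := G_dstar a = G_rstar a.

Definition is_effective_equivalence_relation : Prop :=
  forall (F : frame) (f g : A -> F),
    frame_hom f -> frame_hom g ->
    (forall e, G_quotient_opens e -> f e = g e) ->
    exists h : Q -> F,
      (frame_hom h /\ (forall a, h (G_dstar a) = f a) /\ (forall a, h (G_rstar a) = g a)) /\
      (forall h' : Q -> F,
         frame_hom h' -> (forall a, h' (G_dstar a) = f a) -> (forall a, h' (G_rstar a) = g a) ->
         forall x, h' x = h x).

End GroupoidQuantale.

(* Main.v *)
Require Import Defs.
From Stdlib Require Import Setoid.

Lemma sup_pair_le {F : frame} {x y : F} :
  fle x y -> fsup (fun z => z = x \/ z = y) = y.
Proof.
  intros H. apply fle_antisym.
  - apply fsup_least. intros z [-> | ->]; [exact H | apply fle_refl].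
  - apply fsup_ub. right; reflexivity.
Qed.

Lemma jp_mono (F1 F2 : frame) (f : F1 -> F2) :
  (forall S, f (fsup S) = fsup (img f S)) ->
  forall x y, fle x y -> fle (f x) (f y).
Proof.
  intros Hf x y H. rewrite <- (sup_pair_le (F:=F1) H), Hf.
  apply fsup_ub. exists x. split; auto.
Qed.

Lemma le_top (F : frame) (x : F) : fle x ftop.
Proof. unfold ftop. apply fsup_ub. exact I. Qed.

Lemma meet_top_l (F : frame) (z : F) : fmeet ftop z = z.
Proof.
  apply fle_antisym.
  - apply (proj1 (fmeet_glb ftop z (fmeet ftop z)) (fle_refl _)).
  - apply fmeet_glb. split; [apply le_top | apply fle_refl].
Qed.

Lemma meet_le_l (F : frame) (x y : F) : fle (fmeet x y) x.
Proof. apply (proj1 (fmeet_glb x y (fmeet x y)) (fle_refl _)). Qed.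
Lemma meet_le_r (F : frame) (x y : F) : fle (fmeet x y) y.
Proof. apply (proj1 (fmeet_glb x y (fmeet x y)) (fle_refl _)). Qed.

Theorem theorem5p16 (A Q : frame) (actL : A -> Q -> Q) (actR : Q -> A -> Q)
    (mul : Q -> Q -> Q) (inv : Q -> Q) :
  is_groupoid_quantale actL actR mul inv ->
  (is_principal_quantale actL actR mul inv <->
   is_effective_equivalence_relation actL inv).
Proof.
  intros HG.
  pose proof HG as [HES [_ [u [[[Hu1 [Hu2 Hu3]] [Hud Hur]] _]]]].
  pose proof HES as [[[[[Hb1 [Hb2 [Hb3 [Hb4 [Hb5 [Hb6 [Hb7 [Hb8 Hb9]]]]]]]]
       [Hassoc [HmL [HmR [Hm1 [Hm2 Hm3]]]]]]
       [Hinvj [Hinv2 [Hinvm Hinva]]]] [Hbase1 Hbase2]]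
       [s [[Hsj [Hstop [Hs3 Hs4]]] Hseq]]].
  assert (inv_mono : forall x y, fle x y -> fle (inv x) (inv y))
    by (apply jp_mono; exact Hinvj).
  assert (inv_top : inv ftop = ftop).
  { apply fle_antisym; [apply le_top|].
    rewrite <- (Hinv2 ftop) at 1. apply inv_mono, le_top. }
  assert (inv_meet : forall x y, inv (fmeet x y) = fmeet (inv x) (inv y)).
  { intros x y. apply fle_antisym.
    - apply fmeet_glb; split; apply inv_mono; [apply meet_le_l | apply meet_le_r].
    - rewrite <- (Hinv2 (fmeet (inv x) (inv y))). apply inv_mono.
      apply fmeet_glb; split.
      + rewrite <- (Hinv2 x) at 2. apply inv_mono, meet_le_l.
      + rewrite <- (Hinv2 y) at 2. apply inv_mono, meet_le_r. }
  assert (actL_mono : forall a x y, fle x y -> fle (actL a x) (actL a y))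
    by (intros a; apply jp_mono; exact (Hb2 a)).
  assert (mul_mono : forall a x y, fle x y -> fle (mul a x) (mul a y))
    by (intros a; apply jp_mono; exact (HmR a)).
  assert (HR : forall x, RQ mul x <-> exists a, x = G_dstar actL a).
  { intros x; unfold RQ, G_dstar; split.
    - intros Hx. exists (s x). apply fle_antisym.
      + rewrite <- (Hs4 x) at 1. apply actL_mono, le_top.
      + eapply fle_trans; [apply Hs3|]. rewrite Hassoc.
        eapply fle_trans; [apply mul_mono, le_top | exact Hx].
    - intros [a ->]. rewrite Hm1. apply actL_mono, le_top. }
  assert (HRd : forall a, RQ mul (G_dstar actL a)) by (intros a; apply HR; eauto).
  assert (HLr : forall a, LQ mul inv (G_rstar actL inv a))
    by (intros a; exists (G_dstar actL a); split; auto).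
  assert (HL : forall x, LQ mul inv x <-> exists a, x = G_rstar actL inv a).
  { intros x; split.
    - intros [y [Hy ->]]. apply HR in Hy as [a ->]. exists a; reflexivity.
    - intros [a ->]. apply HLr. }
  assert (Hrform : forall a, G_rstar actL inv a = actR ftop a).
  { intros a. unfold G_rstar, G_dstar.
    rewrite <- (Hb7 ftop) at 1. rewrite Hinva, inv_top, Hb5. reflexivity. }
  assert (Hud' : forall a, u (G_dstar actL a) = a) by exact Hud.
  assert (Hur' : forall a, u (G_rstar actL inv a) = a)
    by (intros a; rewrite Hrform; apply Hur).
  assert (d_hom : frame_hom (G_dstar actL)).
  { unfold G_dstar. split; [|split].
    - intros S. apply Hb1.
    - intros a b. rewrite Hbase1, meet_top_l, Hb6. reflexivity.
    - apply Hb5. }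
  assert (img_comp : forall (X Y Z : frame) (g : X -> Y) (f : Y -> Z) (S : X -> Prop),
             fsup (img f (img g S)) = fsup (img (fun a => f (g a)) S)).
  { intros X Y Z g f S. apply fle_antisym; apply fsup_least.
    - intros z [w [[a [Ha ->]] ->]]. apply fsup_ub. exists a; auto.
    - intros z [a [Ha ->]]. apply fsup_ub. exists (g a). split; auto. exists a; auto. }
  assert (r_hom : frame_hom (G_rstar actL inv)).
  { destruct d_hom as [d1 [d2 d3]]. unfold G_rstar. split; [|split].
    - intros S. rewrite d1, Hinvj. apply img_comp.
    - intros a b. rewrite d2, inv_meet. reflexivity.
    - rewrite d3. exact inv_top. }
  split.
  -
    intros [_ HP] F f g Hf Hg Hfg.
    destruct Hf as [Hf1 [Hf2 Hf3]]. destruct Hg as [Hg1 [Hg2 Hg3]].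
    assert (Hfo : forall P, frame_hom_on P (fun x => f (u x))).
    { intros P. split; [|split].
      - intros S _. rewrite Hu1, Hf1. apply img_comp.
      - intros x y _ _. rewrite Hu2, Hf2. reflexivity.
      - rewrite Hu3, Hf3. reflexivity. }
    assert (Hgo : forall P, frame_hom_on P (fun x => g (u x))).
    { intros P. split; [|split].
      - intros S _. rewrite Hu1, Hg1. apply img_comp.
      - intros x y _ _. rewrite Hu2, Hg2. reflexivity.
      - rewrite Hu3, Hg3. reflexivity. }
    destruct (HP F _ _ (Hfo (RQ mul)) (Hgo (LQ mul inv))) as [h [[Hh [HhR HhL]] Huniq]].
    + intros t [Ht1 Ht2]. apply HR in Ht1 as [a ->]. apply HL in Ht2 as [b Hb].
      pose proof (f_equal u Hb) as E. rewrite Hud', Hur' in E. subst b.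
      rewrite Hud'. apply Hfg. exact Hb.
    + exists h. split; [split; [exact Hh | split]|].
      * intros a. rewrite HhR by apply HRd. rewrite Hud'. reflexivity.
      * intros a. rewrite HhL by apply HLr. rewrite Hur'. reflexivity.
      * intros h' Hh' H1 H2. apply Huniq; auto.
        -- intros x Hx. apply HR in Hx as [a ->]. rewrite H1, Hud'. reflexivity.
        -- intros x Hx. apply HL in Hx as [a ->]. rewrite H2, Hur'. reflexivity.
  -
    intros HE. split; [exact HES|].
    intros F f g Hf Hg Hfg.
    destruct Hf as [Hf1 [Hf2 Hf3]]. destruct Hg as [Hg1 [Hg2 Hg3]].
    destruct d_hom as [d1 [d2 d3]]. destruct r_hom as [r1 [r2 r3]].
    assert (Hf0 : frame_hom (fun a => f (G_dstar actL a))).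
    { split; [|split].
      - intros S. rewrite d1, Hf1.
        + apply img_comp.
        + intros x [a [_ ->]]. apply HRd.
      - intros a b. rewrite d2. apply Hf2; apply HRd.
      - rewrite d3. exact Hf3. }
    assert (Hg0 : frame_hom (fun a => g (G_rstar actL inv a))).
    { split; [|split].
      - intros S. rewrite r1, Hg1.
        + apply img_comp.
        + intros x [a [_ ->]]. apply HLr.
      - intros a b. rewrite r2. apply Hg2; apply HLr.
      - rewrite r3. exact Hg3. }
    destruct (HE F _ _ Hf0 Hg0) as [h [[Hh [Hhd Hhr]] Huniq]].
    + intros e He. unfold G_quotient_opens in He. rewrite <- He.
      apply Hfg. split; [apply HRd|]. rewrite He. apply HLr.
    + exists h. split; [split; [exact Hh | split]|].
      * intros x Hx. apply HR in Hx as [a ->]. apply Hhd.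
      * intros x Hx. apply HL in Hx as [a ->]. apply Hhr.
      * intros h' Hh' H1 H2. apply Huniq; auto.
Qed.
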